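(* In symmetric private information retrieval with $N=2$ databases and $K=3$ messages of length $L$, when the upload cost is $U=2\log_2 4=4$, the optimal (minimum achievable) download cost is $D=2L$, and the minimal amount of required common randomness is $H(\mathcal{R})=L$.
   Context: SPIR setting: each of $N$ non-colluding databases stores the same $K$ i.i.d. messages $W_1,\dots,W_K$, each consisting of $L$ i.i.d. uniform symbols from a sufficiently large finite field $\mathbb{F}_q$ (entropies in $q$-ary units, $H(W_k)=L$, $H(W_{1:K})=KL$). The user wants $W_k$, $k\in[K]$, with private randomness $\mathcal{F}$; the databases share common randomness $\mathcal{R}$, and $I(W_{1:K};k,\mathcal{F},\mathcal{R})=0$. Queries $Q_n^{[k]}$ are deterministic functions of $\mathcal{F}$; answers satisfy $H(A_n^{[k]}\mid Q_n^{[k]},W_{1:K},\mathcal{R})=0$. Achievability requires reliability $H(W_k\mid\mathcal{F},A_{1:N}^{[k]})=0$; user privacy: for all $n$ and $k'\neq k$, $(Q_n^{[k]},A_n^{[k]},W_{1:K},\mathcal{R})\sim(Q_n^{[k']},A_n^{[k']},W_{1:K},\mathcal{R})$; database privacy $I(W_{\bar k};\mathcal{F},A_{1:N}^{[k]})=0$ with $W_{\bar k}=\{W_j:j\neq k\}$. Upload cost $U$: total number of bits sent from user to databases ($U=4$ when each of the two queries takes one of 4 values). Download cost $D$: total size of the answers (in the same units as $L$). Common randomness amount: $H(\mathcal{R})$. *)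

(* Defs.v *)
From HB Require Import structures.
From mathcomp Require Import all_boot all_order all_algebra.
From mathcomp Require Import reals exp.
Set Implicit Arguments. Unset Strict Implicit. Unset Printing Implicit Defensive.
Import Order.TTheory GRing.Theory Num.Theory.
Local Open Scope ring_scope.

Definition is_dist (R : realType) (T : finType) (p : T -> R) : Prop :=
  (forall t, 0 <= p t) /\ \sum_(t : T) p t = 1.

Definition logb (R : realType) (q : nat) (x : R) : R := ln x / ln (q%:R).

Definition msgs (F : finFieldType) (L : nat) := {ffun 'I_3 -> 'rV[F]_L}.

(* A scheme: user randomness F (type TF, law pF), database common randomness
   R (type TR, law pR), queries Q_n^{[k]} = query n k F with values in a
   4-letter alphabet (so U = 2 log2 4 = 4 bits), answers
   A_n^{[k]} = answer n Q_n^{[k]} W R with values in a finite alphabet TA n. *)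
Record scheme (F : finFieldType) (L : nat) (R : realType) := Scheme {
  sTF : finType;
  sTR : finType;
  pF : sTF -> R;
  pR : sTR -> R;
  sTA : 'I_2 -> finType;
  query : 'I_2 -> 'I_3 -> sTF -> 'I_4;
  answer : forall n : 'I_2, 'I_4 -> msgs F L -> sTR -> sTA n
}.

Arguments sTF {F L R} s.
Arguments sTR {F L R} s.
Arguments pF {F L R} s _.
Arguments pR {F L R} s _.
Arguments sTA {F L R} s _.
Arguments query {F L R} s _ _ _.
Arguments answer {F L R} s n _ _ _.

Section Model.
Variables (F : finFieldType) (L : nat) (R : realType) (S : scheme F L R).

Definition Omega : finType := (sTF S * sTR S * msgs F L)%type.

Definition qF : nat := #|F|.

Definition Pr (w : Omega) : R :=
  pF S w.1.1 * pR S w.1.2 / (#|msgs F L|%:R).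

Definition law (T : finType) (X : Omega -> T) (t : T) : R :=
  \sum_(w : Omega | X w == t) Pr w.

Definition H (T : finType) (X : Omega -> T) : R :=
  - \sum_(t : T) (if law X t == 0 then 0 else law X t * logb qF (law X t)).

Definition condH (T U : finType) (X : Omega -> T) (Y : Omega -> U) : R :=
  H (fun w => (X w, Y w)) - H Y.

Definition MI (T U : finType) (X : Omega -> T) (Y : Omega -> U) : R :=
  H X + H Y - H (fun w => (X w, Y w)).

Definition rvF (w : Omega) : sTF S := w.1.1.
Definition rvR (w : Omega) : sTR S := w.1.2.
Definition rvW (w : Omega) : msgs F L := w.2.
Definition rvWk (k : 'I_3) (w : Omega) : 'rV[F]_L := w.2 k.
(* W_{\bar k}: all messages other than W_k (the k-th entry is erased) *)
Definition rvWbar (k : 'I_3) (w : Omega) : msgs F L :=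
  [ffun j => if j == k then 0 else w.2 j].
Definition rvQ (n : 'I_2) (k : 'I_3) (w : Omega) : 'I_4 := query S n k (rvF w).
Definition rvA (n : 'I_2) (k : 'I_3) (w : Omega) : sTA S n :=
  answer S n (rvQ n k w) (rvW w) (rvR w).

Definition valid : Prop :=
  [/\ is_dist (pF S), is_dist (pR S),
      (* reliability *)
      (forall k : 'I_3,
        condH (rvWk k) (fun w => (rvF w, rvA ord0 k w, rvA (lift ord0 ord0) k w)) = 0),
      (* user privacy *)
      (forall (n : 'I_2) (k k' : 'I_3), k != k' ->
        law (fun w => (rvQ n k w, rvA n k w, rvW w, rvR w)) =
        law (fun w => (rvQ n k' w, rvA n k' w, rvW w, rvR w))) &
      (* database privacy *)
      (forall k : 'I_3,
        MI (rvWbar k) (fun w => (rvF w, rvA ord0 k w, rvA (lift ord0 ord0) k w)) = 0)].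

Definition download : R := \sum_(n : 'I_2) logb qF (#|sTA S n|%:R).

Definition common_rand : R := H rvR.

End Model.

(* Main.v *)
Require Import Defs.
From HB Require Import structures.
From mathcomp Require Import all_boot all_order all_algebra.
From mathcomp Require Import reals exp.
From mathcomp Require Import ring lra zify.
From Stdlib Require Import FunctionalExtensionality.
Set Implicit Arguments. Unset Strict Implicit. Unset Printing Implicit Defensive.
Import Order.TTheory GRing.Theory Num.Theory.
Local Open Scope ring_scope.

Ltac absH := cbv beta; repeat match goal with |- context [@H ?a ?b ?c ?d ?e ?X] => let h := fresh "h" in generalize (@H a b c d e X); intro h end.

Section General.
Variables (F : finFieldType) (L : nat) (R : realType) (S : scheme F L R).
Hypothesis dF : is_dist (pF S).
Hypothesis dR : is_dist (pR S).

Local Notation Om := (Omega S).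
Local Notation P := (@Pr F L R S).
Local Notation M := (#|msgs F L|%:R : R).

Lemma M_gt0 : 0 < M.
Proof. by rewrite ltr0n; apply/card_gt0P; exists 0. Qed.

Lemma Pr_ge0 (w : Om) : 0 <= P w.
Proof.
rewrite /Pr; apply: divr_ge0; last exact: ltW M_gt0.
by apply: mulr_ge0; [case: dF | case: dR].
Qed.

Lemma sum_Om2 (a : sTF S -> R) (b : sTR S * msgs F L -> R) :
  \sum_(w : Om) a w.1.1 * b (w.1.2, w.2) = (\sum_x a x) * (\sum_y b y).
Proof.
rewrite -(pair_bigA _ (fun (xy : sTF S * sTR S) c => a xy.1 * b (xy.2, c))) /=.
rewrite -(pair_bigA _ (fun x y => \sum_c a x * b (y, c))) /=.
rewrite big_distrl /=; apply: eq_bigr => x _.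
rewrite (pair_bigA _ (fun j c => a x * b (j, c))) big_distrr /=.
by apply: eq_bigr => -[].
Qed.

Lemma divM_mulM (x : R) : x / M *+ #|msgs F L| = x.
Proof. by rewrite -mulr_natr mulfVK // gt_eqF // M_gt0. Qed.

Lemma sumR1 : \sum_(y : sTR S * msgs F L) pR S y.1 / M = 1.
Proof.
rewrite -(pair_bigA _ (fun y c => pR S y / M)).
transitivity (\sum_(y : sTR S) pR S y); last by case: dR.
apply: eq_bigr => y _; rewrite sumr_const; exact: divM_mulM.
Qed.


Lemma Pr_sum : \sum_(w : Om) P w = 1.
Proof.
transitivity (\sum_(w : Om) pF S w.1.1 * (fun y => pR S y.1 / M) (w.1.2, w.2)).
  by apply: eq_bigr => w _; rewrite /Pr /= mulrA.
by rewrite (sum_Om2 (pF S) (fun y => pR S y.1 / M)) sumR1 mulr1; case: dF.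
Qed.

Lemma law_ge0 (T : finType) (X : Om -> T) t : 0 <= law X t.
Proof. by apply: sumr_ge0 => w _; exact: Pr_ge0. Qed.

Lemma E_law (T : finType) (X : Om -> T) (phi : T -> R) :
  \sum_t law X t * phi t = \sum_w P w * phi (X w).
Proof.
rewrite [RHS](partition_big X xpredT) //=; apply: eq_bigr => t _.
by rewrite /law big_distrl /=; apply: eq_big => [w|w /eqP ->].
Qed.

Lemma law_sum (T : finType) (X : Om -> T) : \sum_t law X t = 1.
Proof.
transitivity (\sum_t law X t * 1); first by apply: eq_bigr => t _; rewrite mulr1.
by rewrite E_law; under eq_bigr do rewrite mulr1; exact: Pr_sum.
Qed.

Lemma Pr_le_law (T : finType) (X : Om -> T) w : P w <= law X (X w).
Proof.
rewrite /law (bigD1 w) //= lerDl; apply: sumr_ge0 => w' _; exact: Pr_ge0.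
Qed.

Lemma law_le1 (T : finType) (X : Om -> T) t : law X t <= 1.
Proof.
rewrite -(law_sum X) (bigD1 t) //= lerDl; apply: sumr_ge0 => t' _; exact: law_ge0.
Qed.

Local Notation q := (qF F).
Local Notation lq := (ln (q%:R : R)).

Lemma lq_gt0 : 0 < lq.
Proof. by apply: ln_gt0; rewrite ltr1n /qF card_finRing_gt1. Qed.

Lemma H_E (T : finType) (X : Om -> T) : H X = - \sum_w P w * (ln (law X (X w)) / lq).
Proof.
rewrite /H -(E_law X (fun t => ln (law X t) / lq)); congr (- _).
by apply: eq_bigr => t _; case: ifP => [/eqP ->|//]; rewrite mul0r.
Qed.

Lemma sumPr_le (f g : Om -> R) : (forall w, 0 < P w -> f w <= g w) ->
  \sum_w P w * f w <= \sum_w P w * g w.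
Proof.
move=> fg; apply: ler_sum => w _; have := Pr_ge0 w.
rewrite le_eqVlt => /orP[/eqP <-|pw]; first by rewrite !mul0r.
by rewrite ler_wpM2l ?fg // ltW.
Qed.

Lemma sumPr_eq (f g : Om -> R) : (forall w, 0 < P w -> f w = g w) ->
  \sum_w P w * f w = \sum_w P w * g w.
Proof.
move=> fg; apply/le_anti/andP; split; apply: sumPr_le => w pw; rewrite fg //.
Qed.

Lemma law_pos (T : finType) (X : Om -> T) w : 0 < P w -> 0 < law X (X w).
Proof. by move=> pw; apply: lt_le_trans pw (Pr_le_law X w). Qed.

Lemma gibbs (r : Om -> R) : (forall w, 0 < P w -> 0 < r w) ->
  \sum_w P w * r w <= 1 -> \sum_w P w * ln (r w) <= 0.
Proof.
move=> rpos r1; apply: (@le_trans _ _ (\sum_w P w * (r w - 1))).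
  apply: sumPr_le => w pw; have := le_ln1Dx (x := r w - 1).
  rewrite (_ : 1 + (r w - 1) = r w); last by rewrite addrCA subrr addr0.
  by apply; have := rpos w pw; lra.
under eq_bigr do rewrite mulrBr mulr1.
by rewrite sumrB Pr_sum subr_le0.
Qed.

Lemma H_det (T U : finType) (X : Om -> T) (Y : Om -> U) :
  (forall w w', Y w = Y w' -> X w = X w') -> H X <= H Y.
Proof.
move=> det; rewrite !H_E lerN2; apply: sumPr_le => w pw.
rewrite ler_pM2r ?invr_gt0 ?lq_gt0 // ler_ln ?posrE ?law_pos //.
rewrite /law big_mkcond [X in _ <= X]big_mkcond /=; apply: ler_sum => w' _.
case: eqP => [/det ->|_]; first by rewrite eqxx.
by case: ifP => _ //; exact: Pr_ge0.
Qed.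

Lemma H_fun (T U : finType) (f : U -> T) (Y : Om -> U) : H (fun w => f (Y w)) <= H Y.
Proof. by apply: H_det => w w' ->. Qed.

Lemma H_ge0 (T : finType) (X : Om -> T) : 0 <= H X.
Proof.
rewrite H_E oppr_ge0; apply: sumr_le0 => w _; apply: mulr_ge0_le0 (Pr_ge0 w) _.
by rewrite pmulr_lle0 ?invr_gt0 ?lq_gt0 // ln_le0 // law_le1.
Qed.


Lemma marg (T U : finType) (X : Om -> T) (Z : Om -> U) z :
  \sum_x law (fun w => (X w, Z w)) (x, z) = law Z z.
Proof.
rewrite /law [RHS](partition_big X xpredT) //=; apply: eq_bigr => x _.
by apply: eq_bigl => w; rewrite xpair_eqE andbC.
Qed.

Lemma sumPr_div (a : Om -> R) : \sum_w P w * (a w / lq) = (\sum_w P w * a w) / lq.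
Proof. by rewrite big_distrl; apply: eq_bigr => w _; rewrite mulrA. Qed.

Lemma ln_div4 (a b c d : R) : 0 < a -> 0 < b -> 0 < c -> 0 < d ->
  ln (a * b / (c * d)) = ln a + ln b - ln c - ln d.
Proof.
move=> a0 b0 c0 d0; rewrite ln_div ?posrE ?mulr_gt0 // !lnM ?posrE //.
by rewrite opprD addrA.
Qed.

Lemma eqle (x y : R) : x = y -> x <= y.
Proof. by move=> ->. Qed.

Lemma mul_divM (c x d : R) : c != 0 -> c * (x / (c * d)) = x / d.
Proof. by move=> c0; rewrite invfM mulrCA mulVKf. Qed.

Lemma submod (T1 T2 T3 : finType) (X : Om -> T1) (Y : Om -> T2) (Z : Om -> T3) :
  H (fun w => (X w, Y w, Z w)) + H Z <= H (fun w => (X w, Z w)) + H (fun w => (Y w, Z w)).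
Proof.
set XYZ := (fun w => (X w, Y w, Z w)); set XZ := (fun w => (X w, Z w)).
set YZ := (fun w => (Y w, Z w)).
pose r w := law XZ (XZ w) * law YZ (YZ w) / (law XYZ (XYZ w) * law Z (Z w)).
have G : \sum_w P w * ln (r w) <= 0.
  apply: gibbs => [w pw|].
    by rewrite /r divr_gt0 ?mulr_gt0 ?law_pos.
  pose phi (t : T1 * T2 * T3) := law XZ (t.1.1, t.2) * law YZ (t.1.2, t.2) /
     (law XYZ t * law Z t.2).
  pose psi (t : T1 * T2 * T3) := law XZ (t.1.1, t.2) * law YZ (t.1.2, t.2) / law Z t.2.
  have -> : \sum_w P w * r w = \sum_t law XYZ t * phi t by rewrite E_law.
  apply: (@le_trans _ _ (\sum_t psi t)).
    apply: ler_sum => t _; have [->|nz] := eqVneq (law XYZ t) 0.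
      by rewrite mul0r /psi divr_ge0 ?mulr_ge0 ?law_ge0.
    apply: eqle; by rewrite /phi /psi mul_divM.
  rewrite (eq_bigr (fun t => psi (t.1, t.2))); last by case.
  rewrite -(pair_bigA _ (fun xy z => psi (xy, z))) exchange_big /=.
  rewrite -(law_sum Z); apply: ler_sum => z _.
  apply: (@le_trans _ _ ((\sum_x law XZ (x, z)) * (\sum_y law YZ (y, z)) / law Z z)).
    rewrite (eq_bigr (fun t => psi ((t.1, t.2), z))); last by case.
    rewrite -(pair_bigA _ (fun x y => psi ((x, y), z))) /= big_distrl /= big_distrl /=.
    apply: eqle; apply: eq_bigr => x _; rewrite big_distrr /= big_distrl /=.
    by apply: eq_bigr => y _; rewrite /psi.
  rewrite /XZ /YZ !marg; have [->|nz] := eqVneq (law Z z) 0; first by rewrite mulr0 mul0r.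
  by rewrite mulfK.
have E : \sum_w P w * ln (r w) = \sum_w P w * (ln (law XZ (XZ w)) + ln (law YZ (YZ w))
   - ln (law XYZ (XYZ w)) - ln (law Z (Z w))).
  by apply: sumPr_eq => w pw; rewrite /r ln_div4 ?law_pos.
rewrite !H_E !sumPr_div.
suff : (\sum_w P w * ln (law XZ (XZ w))) + (\sum_w P w * ln (law YZ (YZ w)))
  - (\sum_w P w * ln (law XYZ (XYZ w))) - (\sum_w P w * ln (law Z (Z w))) <= 0.
  move=> h; rewrite -!mulNr -!mulrDl ler_pM2r ?invr_gt0 ?lq_gt0 //; lra.
rewrite E in G; move: G; under eq_bigr do rewrite !mulrBr mulrDr.
by rewrite !sumrB big_split.
Qed.


Lemma Om_inh : exists w : Om, true.
Proof.
case: (pickP (@predT Om)) => [w _|h]; first by exists w.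
by have := Pr_sum; rewrite big_pred0 // => /eqP; rewrite eq_sym oner_eq0.
Qed.

Lemma card_pos (T : finType) (X : Om -> T) : (0 < #|T|)%N.
Proof. by have [w0 _] := Om_inh; apply/card_gt0P; exists (X w0). Qed.

Lemma H_logcard (T : finType) (X : Om -> T) : H X <= ln (#|T|%:R) / lq.
Proof.
have n0 : 0 < (#|T|%:R : R) by rewrite ltr0n (card_pos X).
pose r w := (law X (X w) * #|T|%:R)^-1.
have G : \sum_w P w * ln (r w) <= 0.
  apply: gibbs => [w pw|]; first by rewrite /r invr_gt0 mulr_gt0 ?law_pos.
  have -> : \sum_w P w * r w = \sum_t law X t * (law X t * #|T|%:R)^-1 by rewrite E_law.
  apply: (@le_trans _ _ (\sum_(t : T) (#|T|%:R)^-1)).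
    apply: ler_sum => t _; have [->|nz] := eqVneq (law X t) 0.
      by rewrite mul0r invr_ge0 ltW.
    by rewrite invfM mulVKf.
  by rewrite sumr_const -(mulr_natr (#|T|%:R)^-1) mulVf // gt_eqF.
have E : \sum_w P w * ln (r w) = - (\sum_w P w * ln (law X (X w))) - ln (#|T|%:R).
  rewrite (sumPr_eq (g := fun w => - (ln (law X (X w)) + ln (#|T|%:R)))); last first.
    by move=> w pw; rewrite /r lnV ?posrE ?mulr_gt0 ?law_pos // lnM ?posrE ?law_pos.
  under eq_bigr do rewrite mulrN mulrDr.
  by rewrite sumrN big_split /= -big_distrl /= Pr_sum mul1r opprD.
rewrite H_E sumPr_div -mulNr ler_pM2r ?invr_gt0 ?lq_gt0 //.
by rewrite E in G; lra.
Qed.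

Lemma law_comp (T U : finType) (V : Om -> T) (g : T -> U) s :
  law (fun w => g (V w)) s = \sum_(t | g t == s) law V t.
Proof.
rewrite /law (partition_big V (fun t => g t == s)) //.
apply: eq_bigr => t /eqP gt; apply: eq_bigl => w.
by case: (eqVneq (V w) t) => [->|]; rewrite ?gt ?eqxx ?andbF.
Qed.

Lemma H_transfer (T U : finType) (V V' : Om -> T) (g : T -> U) :
  law V =1 law V' -> H (fun w => g (V w)) = H (fun w => g (V' w)).
Proof.
move=> E.
have E' : law (fun w => g (V w)) =1 law (fun w => g (V' w)).
  by move=> s; rewrite !law_comp; apply: eq_bigr => t _; rewrite E.
by rewrite /H; congr (- _); apply: eq_bigr => t _; rewrite E'.
Qed.

Lemma law_bij (T : finType) (X : Om -> T) (sig : Om -> Om) :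
  injective sig -> (forall w, P (sig w) = P w) ->
  law (fun w => X (sig w)) =1 law X.
Proof.
move=> inj Ps t; rewrite /law [RHS](reindex_inj inj) /=.
by apply: eq_bigr => w _; rewrite Ps.
Qed.

Lemma H_bij (T : finType) (X : Om -> T) (sig : Om -> Om) :
  injective sig -> (forall w, P (sig w) = P w) -> H (fun w => X (sig w)) = H X.
Proof.
move=> inj Ps; have E := law_bij X inj Ps.
by rewrite /H; congr (- _); apply: eq_bigr => t _; rewrite E.
Qed.

Lemma sum_split (a : sTF S -> bool) (b : sTR S * msgs F L -> bool) :
  \sum_(w : Om | a w.1.1 && b (w.1.2, w.2)) P w =
  (\sum_(u | a u) pF S u) * (\sum_(v | b v) pR S v.1 / M).
Proof.
rewrite big_mkcond /= [\sum_(u | a u) _]big_mkcond [\sum_(v | b v) _]big_mkcond /=.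
rewrite -(sum_Om2 (fun u => if a u then pF S u else 0)
                 (fun v => if b v then pR S v.1 / M else 0)).
apply: eq_bigr => w _; rewrite /Pr /=.
by case: (a _); case: (b _); rewrite /= ?mul0r ?mulr0 ?mulrA.
Qed.

Lemma law_indep (T1 T2 : finType) (f : sTF S -> T1) (g : sTR S * msgs F L -> T2) x y :
  law (fun w => (f w.1.1, g (w.1.2, w.2))) (x, y) =
  law (fun w => f w.1.1) x * law (fun w => g (w.1.2, w.2)) y.
Proof.
have -> : law (fun w => (f w.1.1, g (w.1.2, w.2))) (x, y) =
   \sum_(w : Om | (f w.1.1 == x) && (g (w.1.2, w.2) == y)) P w.
  by apply: eq_bigl => w; rewrite xpair_eqE.
have -> : law (fun w => f w.1.1) x = \sum_(w : Om | (f w.1.1 == x) && xpredT (w.1.2, w.2)) P w.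
  by apply: eq_bigl => w; rewrite andbT.
have -> : law (fun w => g (w.1.2, w.2)) y = \sum_(w : Om | xpredT w.1.1 && (g (w.1.2, w.2) == y)) P w.
  by [].
rewrite (sum_split (fun u => f u == x) (fun v => g v == y)).
rewrite (sum_split (fun u => f u == x) (fun _ => true)) (sum_split (fun _ => true) (fun v => g v == y)).
rewrite sumR1; case: dF => _ ->.
by rewrite mulr1 mul1r.
Qed.

Lemma H_indep (T1 T2 : finType) (f : sTF S -> T1) (g : sTR S * msgs F L -> T2) :
  H (fun w => (f w.1.1, g (w.1.2, w.2))) =
  H (fun w => f w.1.1) + H (fun w => g (w.1.2, w.2)).
Proof.
rewrite !H_E !sumPr_div.
have -> : \sum_w P w * ln (law (fun w => (f w.1.1, g (w.1.2, w.2))) (f w.1.1, g (w.1.2, w.2))) =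
   \sum_w P w * ln (law (fun w => f w.1.1) (f w.1.1)) +
   \sum_w P w * ln (law (fun w => g (w.1.2, w.2)) (g (w.1.2, w.2))).
  rewrite -big_split /=; under [X in _ = X]eq_bigr do rewrite -mulrDr.
  apply: sumPr_eq => w pw /=.
  rewrite law_indep lnM ?posrE //.
    exact: (law_pos (fun w => f w.1.1) pw).
  exact: (law_pos (fun w => g (w.1.2, w.2)) pw).
by rewrite -!mulNr -mulrDl opprD.
Qed.

Lemma H_unif (T : finType) (X : Om -> T) c :
  (forall t, law X t = c) -> H X = ln (#|T|%:R) / lq.
Proof.
move=> u; have n0 : 0 < (#|T|%:R : R) by rewrite ltr0n (card_pos X).
have nz : (#|T|%:R : R) != 0 by rewrite gt_eqF.
have lqz : lq != 0 by rewrite gt_eqF // lq_gt0.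
have cE : c = (#|T|%:R)^-1.
  have := law_sum X; under eq_bigr do rewrite u.
  rewrite sumr_const -(mulr_natr c) => h.
  by rewrite -[c](mulfK nz) h mul1r.
rewrite /H; under eq_bigr do rewrite u.
rewrite cE invr_eq0 (negbTE nz) sumr_const -(mulr_natr (_ * _)) /logb lnV ?posrE //.
by field; rewrite lqz nz.
Qed.

Lemma H_eqdet (T U : finType) (X : Om -> T) (Y : Om -> U) :
  (forall w w', Y w = Y w' -> X w = X w') ->
  (forall w w', X w = X w' -> Y w = Y w') -> H X = H Y.
Proof. by move=> h1 h2; apply/le_anti/andP; split; apply: H_det. Qed.

Lemma subadd (T U : finType) (X : Om -> T) (Y : Om -> U) :
  H (fun w => (X w, Y w)) <= H X + H Y.
Proof.
have := submod X Y (fun _ => tt).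
have h1 : H (fun w => (X w, Y w)) <= H (fun w => (X w, Y w, tt)) by exact: (H_fun (fun t => t.1) (fun w => (X w, Y w, tt))).
have h2 : H (fun w => (X w, tt)) <= H X by exact: (H_fun (fun x => (x, tt)) X).
have h3 : H (fun w => (Y w, tt)) <= H Y by exact: (H_fun (fun x => (x, tt)) Y).
have h4 := H_ge0 (fun _ : Om => tt).
lra.
Qed.

Lemma H_swap (T U : finType) (X : Om -> T) (Y : Om -> U) :
  H (fun w => (X w, Y w)) = H (fun w => (Y w, X w)).
Proof. by apply: H_eqdet; move=> w w' [-> ->]. Qed.

Lemma MI_sym (T U : finType) (X : Om -> T) (Y : Om -> U) : MI X Y = MI Y X.
Proof. rewrite /MI (H_swap X Y); lra. Qed.

Lemma MI_mono1 (T T' U : finType) (X : Om -> T) (X' : Om -> T') (Y : Om -> U) :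
  (forall w w', X w = X w' -> X' w = X' w') -> MI X' Y <= MI X Y.
Proof.
move=> det; rewrite /MI.
have := submod X Y X'.
have h1 : H (fun w => (X w, Y w)) <= H (fun w => (X w, Y w, X' w)) by exact: (H_fun (fun t => t.1) (fun w => (X w, Y w, X' w))).
have h2 : H (fun w => (X w, X' w)) <= H X by apply: H_det => w w' E; rewrite (det _ _ E) E.
have h3 : H (fun w => (Y w, X' w)) = H (fun w => (X' w, Y w)) by exact: H_swap.
lra.
Qed.

Lemma MI_mono2 (T U U' : finType) (X : Om -> T) (Y : Om -> U) (Y' : Om -> U') :
  (forall w w', Y w = Y w' -> Y' w = Y' w') -> MI X Y' <= MI X Y.
Proof. by move=> det; rewrite MI_sym [MI X Y]MI_sym; exact: MI_mono1. Qed.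


Lemma H_funeq (T U : finType) (f : U -> T) (g : T -> U) (X : Om -> T) (Y : Om -> U) :
  (forall w, X w = f (Y w)) -> (forall w, Y w = g (X w)) -> H X = H Y.
Proof.
by move=> h1 h2; apply: H_eqdet => w w' E; [rewrite !h1 E | rewrite !h2 E].
Qed.

Lemma markov (T1 T2 T3 : finType) (phi : sTF S -> T1) (Wf : sTR S * msgs F L -> T2)
  (Af : T1 -> sTR S * msgs F L -> T3) :
  H (fun w : Om => (Wf (w.1.2, w.2), w.1.1)) + H (fun w : Om => (Af (phi w.1.1) (w.1.2, w.2), w.1.1))
  - H (fun w : Om => (Wf (w.1.2, w.2), Af (phi w.1.1) (w.1.2, w.2), w.1.1)) - H (fun w : Om => w.1.1)
  <= MI (fun w : Om => Wf (w.1.2, w.2)) (fun w : Om => (Af (phi w.1.1) (w.1.2, w.2), phi w.1.1)).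
Proof.
rewrite /MI.
have s1 := submod (fun w : Om => Af (phi w.1.1) (w.1.2, w.2)) (fun w : Om => w.1.1) (fun w : Om => phi w.1.1).
have e1 : H (fun w : Om => (Af (phi w.1.1) (w.1.2, w.2), w.1.1, phi w.1.1)) =
          H (fun w : Om => (Af (phi w.1.1) (w.1.2, w.2), w.1.1)).
  by apply: (H_funeq (f := fun t => (t.1, t.2, phi t.2)) (g := fun t => (t.1.1, t.1.2))).
have e2 : H (fun w : Om => (w.1.1, phi w.1.1)) = H (fun w : Om => w.1.1).
  by apply: (H_funeq (f := fun t => (t, phi t)) (g := fun t => t.1)).
have s2 := submod (fun w : Om => (w.1.2, w.2)) (fun w : Om => w.1.1)
   (fun w : Om => (Wf (w.1.2, w.2), Af (phi w.1.1) (w.1.2, w.2), phi w.1.1)).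
have e3 : H (fun w : Om => ((w.1.2, w.2), w.1.1, (Wf (w.1.2, w.2), Af (phi w.1.1) (w.1.2, w.2), phi w.1.1))) =
          H (fun w : Om => ((w.1.2, w.2), w.1.1)).
  by apply: (H_funeq (f := fun t => (t, (Wf t.1, Af (phi t.2) t.1, phi t.2))) (g := fun t => t.1)).
have e4 : H (fun w : Om => (Wf (w.1.2, w.2), Af (phi w.1.1) (w.1.2, w.2), phi w.1.1)) =
          H (fun w : Om => (Wf (w.1.2, w.2), (Af (phi w.1.1) (w.1.2, w.2), phi w.1.1))).
  by apply: (H_funeq (f := fun t => (t.1, t.2.1, t.2.2)) (g := fun t => (t.1.1, (t.1.2, t.2)))).
have e5 : H (fun w : Om => ((w.1.2, w.2), (Wf (w.1.2, w.2), Af (phi w.1.1) (w.1.2, w.2), phi w.1.1))) =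
          H (fun w : Om => ((w.1.2, w.2), phi w.1.1)).
  by apply: (H_funeq (f := fun t => (t.1, (Wf t.1, Af t.2 t.1, t.2))) (g := fun t => (t.1, t.2.2))).
have e6 : H (fun w : Om => (w.1.1, (Wf (w.1.2, w.2), Af (phi w.1.1) (w.1.2, w.2), phi w.1.1))) =
          H (fun w : Om => (Wf (w.1.2, w.2), Af (phi w.1.1) (w.1.2, w.2), w.1.1)).
  by apply: (H_funeq (f := fun t => (t.2, (t.1.1, t.1.2, phi t.2))) (g := fun t => (t.2.1.1, t.2.1.2, t.1))).
have s3 := subadd (fun w : Om => (w.1.2, w.2)) (fun w : Om => phi w.1.1).
have i1 := H_indep (fun x => x) (fun v => v).
have i2 := H_swap (fun w : Om => (w.1.2, w.2)) (fun w : Om => w.1.1).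
have s4 := subadd (fun w : Om => Wf (w.1.2, w.2)) (fun w : Om => w.1.1).
simpl in *.
lra.
Qed.


Lemma logq_pow n : ln ((q ^ n)%:R : R) / lq = n%:R.
Proof.
rewrite natrX lnXn ?ltr0n ?(ltn_trans _ (card_finRing_gt1 F)) //.
by rewrite -(mulr_natl (ln _) n) mulfK // gt_eqF // lq_gt0.
Qed.

Lemma card_rV : #|'rV[F]_L| = (q ^ L)%N.
Proof. by rewrite card_mx mul1n. Qed.

Lemma card_msgs : #|msgs F L| = (q ^ (3 * L))%N.
Proof. by rewrite card_ffun card_ord card_rV -expnM mulnC. Qed.

Lemma H_W : H (@rvW F L R S) = 3%:R * L%:R.
Proof.
rewrite (@H_unif _ _ (M^-1)) ?card_msgs ?logq_pow ?natrM //.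
move=> c0.
have -> : law (@rvW F L R S) c0 = \sum_(w : Om | (fun _ => true) w.1.1 && (fun v => v.2 == c0) (w.1.2, w.2)) P w by [].
rewrite (sum_split (fun _ => true) (fun v => v.2 == c0)).
have -> : \sum_(u | true) pF S u = 1 by case: dF.
rewrite mul1r.
rewrite -(pair_big (fun _ => true) (fun c => c == c0) (fun b c => pR S b / M)) /=.
transitivity (\sum_(b : sTR S) pR S b / M); first by apply: eq_bigr => b _; rewrite big_pred1_eq.
by rewrite -big_distrl /=; case: dR => _ ->; rewrite mul1r card_msgs.
Qed.

Lemma H_Wbar (k : 'I_3) : H (@rvWbar F L R S k) <= 2%:R * L%:R.
Proof.
apply: (@le_trans _ _ (H (fun w : Om => (w.2 (lift k ord0), w.2 (lift k ord_max))))).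
  apply: H_det => w w' [E1 E2]; apply/ffunP => j; rewrite !ffunE.
  case: (unliftP k j) => [j'|] ->; last by rewrite eqxx.
  have /negbTE -> : lift k j' != k by rewrite eq_sym neq_lift.
  have [->|->] : j' = ord0 \/ j' = ord_max.
    by case: j' => -[|[|//]] p; [left|right]; apply: val_inj.
  by []. by [].
apply: le_trans (H_logcard _) _.
by rewrite card_prod card_rV -expnD logq_pow natrD mulr2n mulrDl mul1r.
Qed.

Lemma rvA_det (k : 'I_3) (n : 'I_2) (w w' : Om) :
  (rvF w, rvA ord0 k w, rvA (lift ord0 ord0) k w) =
  (rvF w', rvA ord0 k w', rvA (lift ord0 ord0) k w') ->
  (rvA n k w, rvQ n k w) = (rvA n k w', rvQ n k w').
Proof.
case=> EF E0 E1; rewrite /rvQ EF.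
have [->|->] : n = ord0 \/ n = lift ord0 ord0.
  by case: n => -[|[|//]] p; [left|right]; apply: val_inj.
  by rewrite E0.
by rewrite E1.
Qed.

Lemma MI_transfer (T A B : finType) (V V' : Om -> T) (f : T -> A) (g : T -> B) :
  law V =1 law V' ->
  MI (fun w => f (V w)) (fun w => g (V w)) = MI (fun w => f (V' w)) (fun w => g (V' w)).
Proof.
move=> E; rewrite /MI (H_transfer f E) (H_transfer g E).
by rewrite (H_transfer (fun t => (f t, g t)) E).
Qed.

Lemma MI_AQ (k k' : 'I_3) (n : 'I_2) : k != k' -> valid S ->
  MI (rvWk k) (fun w : Om => (rvA n k w, rvQ n k w)) <= 0.
Proof.
move=> kk' [_ _ _ up dbp].
have E : law (fun w : Om => (rvQ n k w, rvA n k w, rvW w, rvR w)) =1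
         law (fun w : Om => (rvQ n k' w, rvA n k' w, rvW w, rvR w)).
  by move=> t; rewrite (up n k k' kk').
have -> : MI (rvWk k) (fun w : Om => (rvA n k w, rvQ n k w)) =
          MI (rvWk k) (fun w : Om => (rvA n k' w, rvQ n k' w)) :=
  MI_transfer (fun t : 'I_4 * sTA S n * msgs F L * sTR S => t.1.2 k)
              (fun t : 'I_4 * sTA S n * msgs F L * sTR S => (t.1.1.2, t.1.1.1)) E.
have m1 : MI (rvWk k) (fun w : Om => (rvA n k' w, rvQ n k' w)) <=
          MI (rvWbar k') (fun w : Om => (rvA n k' w, rvQ n k' w)).
  apply: MI_mono1 => w w' /(congr1 (fun f : msgs F L => f k)).
  by rewrite /rvWbar !ffunE (negbTE kk'); move=> Ek; exact: Ek.
have m2 : MI (rvWbar k') (fun w : Om => (rvA n k' w, rvQ n k' w)) <=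
          MI (rvWbar k') (fun w : Om => (rvF w, rvA ord0 k' w, rvA (lift ord0 ord0) k' w)).
  by apply: MI_mono2 => w w'; apply: rvA_det.
by apply: (le_trans m1); apply: (le_trans m2); rewrite (dbp k').
Qed.

Lemma converse : valid S -> 2 * L%:R <= download S /\ L%:R <= common_rand S.
Proof.
move=> V; have V' := V; case: V' => _ _ rel _ dbp.
pose k : 'I_3 := ord0. pose k' : 'I_3 := lift ord0 ord0.
have kk' : k != k' by [].
pose n0 : 'I_2 := ord0. pose n1 : 'I_2 := lift ord0 ord0.
pose Y := fun w : Om => (rvF w, rvA n0 k w, rvA n1 k w).
have f1 := H_W.
have f2 : H (@rvW F L R S) <= H (@rvWk F L R S k) + H (@rvWbar F L R S k).
  apply: (@le_trans _ _ (H (fun w : Om => (rvWk k w, rvWbar k w)))); last exact: subadd.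
  apply: H_det => w w' [Ek Eb].
  apply/ffunP => j; case: (eqVneq j k) => [->|njk] //.
  by have := congr1 (fun f : msgs F L => f j) Eb; rewrite !ffunE (negbTE njk).
have f3 := H_Wbar k.
have f4 : H (fun w : Om => (rvWk k w, rvF w)) = H (@rvWk F L R S k) + H (@rvF F L R S).
  rewrite H_swap addrC; exact: (H_indep (fun x => x) (fun v : sTR S * msgs F L => v.2 k)).
have f5 := rel k; rewrite /condH in f5.
have f6 : forall n : 'I_2,
  H (fun w : Om => (rvWk k w, rvF w)) + H (fun w : Om => (rvA n k w, rvF w))
  - H (fun w : Om => (rvWk k w, rvA n k w, rvF w)) - H (@rvF F L R S) <= 0.
  move=> n; apply: le_trans (MI_AQ n kk' V).
  exact: (markov (query S n k) (fun v : sTR S * msgs F L => v.2 k) (fun (q : 'I_4) (v : sTR S * msgs F L) => answer S n q v.2 v.1)).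
have f7 : forall n : 'I_2, H (fun w : Om => (rvWk k w, rvA n k w, rvF w)) <=
     H (fun w : Om => (rvWk k w, (rvF w, rvA ord0 k w, rvA (lift ord0 ord0) k w))).
  move=> n; apply: H_det => w w' E; have Ek := congr1 fst E; have EY := congr1 snd E.
  simpl in Ek, EY; case: (rvA_det n EY) => EA _.
  by rewrite Ek EA; case: EY => ->.
have f8a := submod (rvA ord0 k) (rvA (lift ord0 ord0) k) (@rvF F L R S).
have f8b : H (fun w : Om => (rvA ord0 k w, rvA (lift ord0 ord0) k w, rvF w)) =
           H (fun w : Om => (rvF w, rvA ord0 k w, rvA (lift ord0 ord0) k w)).
  by apply: (H_funeq (f := fun t => (t.1.2, t.2, t.1.1)) (g := fun t => (t.2, t.1.1, t.1.2))).
have f9a : H (fun w : Om => (rvF w, rvA ord0 k w, rvA (lift ord0 ord0) k w)) <=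
           H (fun w : Om => (rvA ord0 k w, rvF w, rvA (lift ord0 ord0) k w)) :=
  H_fun (fun t => (t.1.2, t.1.1, t.2)) (fun w : Om => (rvA ord0 k w, rvF w, rvA (lift ord0 ord0) k w)).
have f9b := subadd (fun w : Om => (rvA ord0 k w, rvF w)) (rvA (lift ord0 ord0) k).
have f9c : H (fun w : Om => (rvF w, rvA ord0 k w, rvA (lift ord0 ord0) k w)) <=
           H (fun w : Om => (rvA (lift ord0 ord0) k w, rvF w, rvA ord0 k w)) :=
  H_fun (fun t => (t.1.2, t.2, t.1.1)) (fun w : Om => (rvA (lift ord0 ord0) k w, rvF w, rvA ord0 k w)).
have f9d := subadd (fun w : Om => (rvA (lift ord0 ord0) k w, rvF w)) (rvA ord0 k).
have f10a := H_logcard (rvA ord0 k).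
have f10b := H_logcard (rvA (lift ord0 ord0) k).
have f11a : H (fun w : Om => ((rvF w, rvA ord0 k w, rvA (lift ord0 ord0) k w), rvW w)) <=
            H (fun w : Om => (rvR w, (rvF w, rvW w))) :=
  H_fun (fun t => ((t.2.1, answer S ord0 (query S ord0 k t.2.1) t.2.2 t.1,
                         answer S (lift ord0 ord0) (query S (lift ord0 ord0) k t.2.1) t.2.2 t.1), t.2.2))
        (fun w : Om => (rvR w, (rvF w, rvW w))).
have f11b := subadd (@rvR F L R S) (fun w : Om => (rvF w, rvW w)).
have f12 : H (fun w : Om => (rvWbar k w, (rvF w, rvA ord0 k w, rvA (lift ord0 ord0) k w))) <=
           H (fun w : Om => ((rvF w, rvA ord0 k w, rvA (lift ord0 ord0) k w), rvW w)) :=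
  H_fun (fun t : (sTF S * sTA S ord0 * sTA S (lift ord0 ord0)) * msgs F L => ([ffun j => if j == k then 0 else t.2 j], t.1))
        (fun w : Om => ((rvF w, rvA ord0 k w, rvA (lift ord0 ord0) k w), rvW w)).
have f13 := dbp k; rewrite /MI in f13.
have f14 := subadd (@rvF F L R S) (@rvW F L R S).
have f6a := f6 ord0. have f6b := f6 (lift ord0 ord0).
have f7a := f7 ord0. have f7b := f7 (lift ord0 ord0).
rewrite /download /common_rand /logb big_ord_recl big_ord1.
split; lra.
Qed.

End General.

Definition tau (k : 'I_3) (s : 'I_4) : 'I_4 := @Ordinal 4 (Nat.lxor k.+1 s %% 4) (@ltn_pmod _ 4 isT).
Definition coef (n : 'I_2) (q : 'I_4) (j : 'I_3) : bool :=
  if val n == 0 then (val q != 0) && (val j != (val q).-1)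
  else (val q == 0) || (val j == (val q).-1).
Lemma P1 (k : 'I_3) (s : 'I_4) (j : 'I_3) : j != k -> coef ord0 s j = coef (lift ord0 ord0) (tau k s) j.
Proof.
by case: k => -[|[|[|//]]] ?; case: s => -[|[|[|[|//]]]] ?; case: j => -[|[|[|//]]] ?; vm_compute.
Qed.
Lemma P2 (k : 'I_3) (s : 'I_4) : coef ord0 s k != coef (lift ord0 ord0) (tau k s) k.
Proof.
by case: k => -[|[|[|//]]] ?; case: s => -[|[|[|[|//]]]] ?; vm_compute.
Qed.
Lemma P3 (k : 'I_3) (s : 'I_4) : tau k (tau k s) = s.
Proof.
apply: val_inj.
by case: k => -[|[|[|//]]] ?; case: s => -[|[|[|[|//]]]] ?; vm_compute.
Qed.

Section Ach.
Variables (F : finFieldType) (L : nat) (R : realType).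

Definition ans (n : 'I_2) (q : 'I_4) (W : msgs F L) (r : 'rV[F]_L) : 'rV[F]_L :=
  r + \sum_j (coef n q j)%:R *: W j.
Definition qry (n : 'I_2) (k : 'I_3) (s : 'I_4) : 'I_4 := if val n == 0 then s else tau k s.

Definition Sch : scheme F L R :=
  @Scheme F L R 'I_4 'rV[F]_L (fun _ => 4%:R^-1) (fun _ => (#|'rV[F]_L|%:R)^-1)
    (fun _ => 'rV[F]_L) qry (fun n => ans n).

Local Notation Om := (Omega Sch).

Lemma dFs : is_dist (pF Sch).
Proof.
split => [t|]; first by rewrite /= invr_ge0 ler0n.
by rewrite /= sumr_const card_ord -(mulr_natr (_^-1)) mulVf // pnatr_eq0.
Qed.

Lemma rV_pos : (0 < #|'rV[F]_L|)%N.
Proof. by apply/card_gt0P; exists 0. Qed.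

Lemma dRs : is_dist (pR Sch).
Proof.
split => [t|]; first by rewrite /= invr_ge0 ler0n.
by rewrite /= sumr_const -(mulr_natr (_^-1)) mulVf // pnatr_eq0 -lt0n rV_pos.
Qed.

Lemma bool_diff (b b' : bool) : b != b' -> (b%:R - b'%:R : F) != 0.
Proof. by case: b; case: b' => //= _; rewrite ?subr0 ?sub0r ?oppr_eq0 oner_eq0. Qed.

Lemma diffA (k : 'I_3) (s : 'I_4) (W : msgs F L) (r : 'rV[F]_L) :
  ans ord0 s W r - ans (lift ord0 ord0) (tau k s) W r =
  ((coef ord0 s k)%:R - (coef (lift ord0 ord0) (tau k s) k)%:R) *: W k.
Proof.
rewrite /ans opprD addrACA subrr add0r -sumrB (bigD1 k) //= big1 ?addr0.
  by rewrite scalerBl.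
by move=> j jk; rewrite (P1 s jk) subrr.
Qed.

Lemma Wk_det (k : 'I_3) (w w' : Om) :
  (rvF w, rvA ord0 k w, rvA (lift ord0 ord0) k w) =
  (rvF w', rvA ord0 k w', rvA (lift ord0 ord0) k w') -> rvWk k w = rvWk k w'.
Proof.
move=> E.
have e : forall w0 : Om, rvA ord0 k w0 - rvA (lift ord0 ord0) k w0 =
    ((coef ord0 w0.1.1 k)%:R - (coef (lift ord0 ord0) (tau k w0.1.1) k)%:R) *: rvWk k w0.
  by move=> w0; exact: diffA.
have EF : w.1.1 = w'.1.1 := congr1 (fun t => t.1.1) E.
have E0 : rvA ord0 k w = rvA ord0 k w' := congr1 (fun t => t.1.2) E.
have E1 : rvA (lift ord0 ord0) k w = rvA (lift ord0 ord0) k w' := congr1 (fun t => t.2) E.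
have h1 := e w; have h2 := e w'; rewrite E0 E1 h2 -EF in h1.
apply: (scalerI _ (esym h1)).
exact/bool_diff/P2.
Qed.


Local Notation lq := (ln ((qF F)%:R : R)).

Lemma ach_rel (k : 'I_3) :
  condH (rvWk k) (fun w : Om => (rvF w, rvA ord0 k w, rvA (lift ord0 ord0) k w)) = 0.
Proof.
rewrite /condH.
have -> : H (fun w : Om => (rvWk k w, (rvF w, rvA ord0 k w, rvA (lift ord0 ord0) k w))) =
          H (fun w : Om => (rvF w, rvA ord0 k w, rvA (lift ord0 ord0) k w)).
  apply: (H_eqdet dFs dRs) => w w' E; first by rewrite (Wk_det E) E.
  exact: (congr1 snd E).
by rewrite subrr.
Qed.

Lemma qry_inj (n : 'I_2) (k : 'I_3) : injective (qry n k).
Proof.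
move=> a b; rewrite /qry; case: ifP => _ // /(congr1 (tau k)).
by rewrite !P3.
Qed.

Lemma ach_up (n : 'I_2) (k k' : 'I_3) :
  law (fun w : Om => (rvQ n k w, rvA n k w, rvW w, rvR w)) =
  law (fun w : Om => (rvQ n k' w, rvA n k' w, rvW w, rvR w)).
Proof.
pose X : Om -> 'I_4 * sTA Sch n * msgs F L * sTR Sch :=
  fun w : Om => (w.1.1, ans n w.1.1 w.2 w.1.2, w.2, w.1.2).
have E : forall k0, law (fun w : Om => (rvQ n k0 w, rvA n k0 w, rvW w, rvR w)) =1 law X.
  move=> k0; pose sig := fun w : Om => ((qry n k0 w.1.1, w.1.2), w.2) : Om.
  have inj : injective sig.
    by move=> [[a b] c] [[a' b'] c'] /= [/qry_inj -> -> ->].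
  have Ps : forall w, Pr (sig w) = Pr w by [].
  exact: (law_bij X inj Ps).
by apply: functional_extensionality => t; rewrite !E.
Qed.

Lemma H_RW : H (fun w : Om => (w.1.2, w.2)) = 4%:R * L%:R.
Proof.
rewrite (H_unif dFs dRs (c := ((#|'rV[F]_L|%:R)^-1 / #|msgs F L|%:R))).
  by rewrite card_prod card_rV card_msgs -expnD (logq_pow F R) -natrM; congr (_%:R); lia.
move=> v.
have -> : law (fun w : Om => (w.1.2, w.2)) v =
  \sum_(w : Om | (fun _ => true) w.1.1 && (fun v' => v' == v) (w.1.2, w.2)) Pr w by [].
rewrite (sum_split (fun _ => true) (fun v' => v' == v)).
have -> : \sum_(u | true) pF Sch u = 1 by case: dFs.
by rewrite mul1r big_pred1_eq.
Qed.

Lemma H_Rs : H (@rvR F L R Sch) = L%:R.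
Proof.
rewrite (H_unif dFs dRs (c := ((#|'rV[F]_L|%:R)^-1))).
  by rewrite card_rV (logq_pow F R).
move=> b.
have -> : law (@rvR F L R Sch) b =
  \sum_(w : Om | (fun _ => true) w.1.1 && (fun v' : sTR Sch * msgs F L => v'.1 == b) (w.1.2, w.2)) Pr w by [].
rewrite (sum_split (fun _ => true) (fun v' : sTR Sch * msgs F L => v'.1 == b)).
have -> : \sum_(u | true) pF Sch u = 1 by case: dFs.
rewrite mul1r (eq_bigl (fun v : sTR Sch * msgs F L => (v.1 == b) && true)); last by move=> v; rewrite andbT.
rewrite -(pair_big (fun b' => b' == b) (fun _ => true) (fun b' c => pR Sch b' / #|msgs F L|%:R)) /=.
rewrite big_pred1_eq sumr_const; exact: divM_mulM.
Qed.

Lemma H_Arv (n : 'I_2) (k : 'I_3) : H (@rvA F L R Sch n k) <= L%:R.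
Proof.
apply: le_trans (H_logcard dFs dRs _) _.
by rewrite card_rV (logq_pow F R).
Qed.

Lemma ach_db (k : 'I_3) :
  MI (rvWbar k) (fun w : Om => (rvF w, rvA ord0 k w, rvA (lift ord0 ord0) k w)) = 0.
Proof.
have -> : MI (rvWbar k) (fun w : Om => (rvF w, rvA ord0 k w, rvA (lift ord0 ord0) k w)) =
  H (@rvWbar F L R Sch k) + H (fun w : Om => (rvF w, rvA ord0 k w, rvA (lift ord0 ord0) k w))
  - H (fun w : Om => (rvWbar k w, (rvF w, rvA ord0 k w, rvA (lift ord0 ord0) k w))) by [].
have ha : H (@rvWbar F L R Sch k) <= 2%:R * L%:R := H_Wbar dFs dRs k.
have b1 : H (fun w : Om => (rvF w, rvA ord0 k w, rvA (lift ord0 ord0) k w)) <=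
          H (fun w : Om => (rvF w, rvA ord0 k w)) + H (@rvA F L R Sch (lift ord0 ord0) k) :=
  subadd dFs dRs (fun w : Om => (rvF w, rvA ord0 k w)) (rvA (lift ord0 ord0) k).
have b2 : H (fun w : Om => (rvF w, rvA ord0 k w)) <= H (@rvF F L R Sch) + H (@rvA F L R Sch ord0 k) :=
  subadd dFs dRs (@rvF F L R Sch) (rvA ord0 k).
have b3 : H (@rvA F L R Sch ord0 k) <= L%:R := H_Arv ord0 k.
have b4 : H (@rvA F L R Sch (lift ord0 ord0) k) <= L%:R := H_Arv (lift ord0 ord0) k.
pose sig := fun w : Om => ((w.1.1, ans ord0 w.1.1 w.2 w.1.2), w.2) : Om.
have c1 : H sig <=
          H (fun w : Om => (rvWbar k w, (rvF w, rvA ord0 k w, rvA (lift ord0 ord0) k w))).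
  apply: (H_det dFs dRs) => w w' E.
  have EY := congr1 snd E; have Eb := congr1 fst E; simpl in EY, Eb.
  have Ek := Wk_det EY.
  have EF : w.1.1 = w'.1.1 := congr1 (fun t => t.1.1) EY.
  have E0 : ans ord0 w.1.1 w.2 w.1.2 = ans ord0 w'.1.1 w'.2 w'.1.2 := congr1 (fun t => t.1.2) EY.
  have EW : w.2 = w'.2.
    apply/ffunP => j; case: (eqVneq j k) => [->|njk]; first exact: Ek.
    by have := congr1 (fun f : msgs F L => f j) Eb; rewrite !ffunE (negbTE njk).
  by rewrite /sig E0 EF EW.
have c2 : H sig = H (fun w : Om => w).
  have inj : injective sig.
    move=> [[a b] c] [[a' b'] c'] /= [Ea Eb' Ec]; subst a' c'.
    by move: Eb'; rewrite /ans => /addIr ->.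
  have Ps : forall w, Pr (sig w) = Pr w by [].
  exact: (H_bij (fun w : Om => w) inj Ps).
have c3 : H (fun w : Om => w) = H (@rvF F L R Sch) + H (fun w : Om => (w.1.2, w.2)).
  rewrite -(H_indep dFs dRs (fun x => x) (fun v => v)).
  apply: (H_funeq dFs dRs (f := fun t => ((t.1, t.2.1), t.2.2)) (g := fun t => (t.1.1, (t.1.2, t.2)))).
    by case=> [[? ?] ?].
  by [].
have d : H (fun w : Om => (w.1.2, w.2)) = 4%:R * L%:R := H_RW.
have e : H (fun w : Om => (rvWbar k w, (rvF w, rvA ord0 k w, rvA (lift ord0 ord0) k w))) <=
   H (@rvWbar F L R Sch k) + H (fun w : Om => (rvF w, rvA ord0 k w, rvA (lift ord0 ord0) k w)) :=
  subadd dFs dRs (rvWbar k) (fun w : Om => (rvF w, rvA ord0 k w, rvA (lift ord0 ord0) k w)).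
clearbody sig.
move: ha b1 b2 b3 b4 c1 c2 c3 d e; absH => *.
apply/le_anti/andP; split; lra.
Qed.

Lemma ach_valid : valid Sch.
Proof.
split; [exact: dFs | exact: dRs | exact: ach_rel | | exact: ach_db].
by move=> n k k' _; exact: ach_up.
Qed.

Lemma ach_download : download Sch = 2%:R * L%:R.
Proof.
rewrite /download /logb big_ord_recl big_ord1.
have -> : forall n : 'I_2, ln (#|sTA Sch n|%:R : R) / ln ((qF F)%:R) = L%:R.
  by move=> n; rewrite card_rV (logq_pow F R).
by rewrite mulr2n mulrDl mul1r.
Qed.
End Ach.

Theorem theorem3 (R : realType) :
  exists q0 : nat, forall (F : finFieldType) (L : nat),
    (q0 <= #|F|)%N -> (0 < L)%N ->
    (exists S : scheme F L R,
        valid S /\ download S = 2 * L%:R /\ common_rand S = L%:R) /\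
    (forall S : scheme F L R,
        valid S -> 2 * L%:R <= download S /\ L%:R <= common_rand S).
Proof.
exists 0%N => F L _ _; split.
  exists (Sch F L R); split; first exact: ach_valid.
  by split; [exact: ach_download | exact: H_Rs].
move=> S V; case: (V) => dF dR _ _ _; exact: converse dF dR V.
Qed.

Print Assumptions theorem3.
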